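(* Let $A\in\mathbb{C}^{m\times n}$ and $X\in\mathbb{C}^{n\times m}$. Then the following are equivalent: (1) $X\in A\{1,4^{\mathfrak{m}}\}$; (2) $XAA^{\sim}=A^{\sim}$; (3) $XA=P_{\mathcal{R}(A^{\sim}),\mathcal{N}(A)}$. In this case, $$A\{1,4^{\mathfrak{m}}\}=\left\{A^{(1,4^{\mathfrak{m}})}+Z(I_m-AA^{(1,4^{\mathfrak{m}})}) : Z\in\mathbb{C}^{n\times m}\right\},$$ where $A^{(1,4^{\mathfrak{m}})}\in A\{1,4^{\mathfrak{m}}\}$ is fixed but arbitrary.
   Context: For a positive integer $k$, the Minkowski metric matrix of order $k$ is $G_k=\mathrm{diag}(1,-I_{k-1})$ (with $G_1=(1)$). For $A\in\mathbb{C}^{m\times n}$, the Minkowski adjoint is $A^{\sim}=G_nA^*G_m$, where $A^*$ is the conjugate transpose. For $A\in\mathbb{C}^{m\times n}$ and $X\in\mathbb{C}^{n\times m}$ consider the equations $(1)\ AXA=A$, $(2)\ XAX=X$, $(3^{\mathfrak{m}})\ (AX)^{\sim}=AX$, $(4^{\mathfrak{m}})\ (XA)^{\sim}=XA$; $A\{i,\dots,k\}$ denotes the set of all $X$ satisfying the listed equations. $\mathcal{R}(\cdot)$ and $\mathcal{N}(\cdot)$ denote range and null space. For subspaces $\mathcal{S},\mathcal{T}\subseteq\mathbb{C}^n$ with $\mathcal{S}\oplus\mathcal{T}=\mathbb{C}^n$, $P_{\mathcal{S},\mathcal{T}}$ denotes the projector onto $\mathcal{S}$ along $\mathcal{T}$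 (statement (3) includes that this direct sum holds). *)

(* Defs.v *)
From HB Require Import structures.
From mathcomp Require Import all_boot all_order all_algebra.
Set Implicit Arguments. Unset Strict Implicit. Unset Printing Implicit Defensive.
Import Order.TTheory GRing.Theory Num.Theory.
Local Open Scope ring_scope.

Section Minkowski.
Variable C : numClosedFieldType.

Definition mink_G (k : nat) : 'M[C]_k :=
  \matrix_(i < k, j < k) (if i == j then (if val i == 0%N then 1 else -1) else 0).

Definition ctrmx (m n : nat) (A : 'M[C]_(m, n)) : 'M[C]_(n, m) :=
  (map_mx Num.conj A)^T.

Definition mink_adj (m n : nat) (A : 'M[C]_(m, n)) : 'M[C]_(n, m) :=
  mink_G n *m ctrmx A *m mink_G m.

Definition is_g14m (m n : nat) (A : 'M[C]_(m, n)) (X : 'M[C]_(n, m)) : Prop :=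
  A *m X *m A = A /\ mink_adj (X *m A) = X *m A.

Definition in_range (m n : nat) (A : 'M[C]_(m, n)) (v : 'cV[C]_m) : Prop :=
  exists w : 'cV[C]_n, v = A *m w.
Definition in_null (m n : nat) (A : 'M[C]_(m, n)) (v : 'cV[C]_n) : Prop :=
  A *m v = 0.

Definition is_proj_onto_along (n : nat) (S T : 'cV[C]_n -> Prop) (P : 'M[C]_n) : Prop :=
  [/\ (forall v, S v -> T v -> v = 0),
      (forall v, exists s t, [/\ S s, T t & v = s + t]) &
      (forall s t, S s -> T t -> P *m (s + t) = s)].
End Minkowski.

(* Main.v *)
Require Import Defs.
From HB Require Import structures.
From mathcomp Require Import all_boot all_order all_algebra.
Import Order.TTheory GRing.Theory Num.Theory.
Local Open Scope ring_scope.

Section H.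
Variable C : numClosedFieldType.

Lemma GG k : mink_G C k *m mink_G C k = 1%:M.
Proof.
apply/matrixP=> i j; rewrite !mxE (bigD1 i) //= big1 => [|l /negbTE hl]; last first.
  by rewrite !mxE eq_sym hl mul0r.
rewrite !mxE eqxx addr0; case: (i =P j) => [->|_]; last by rewrite mulr0.
by case: (val j == 0%N); rewrite ?mulr1 ?mulrNN ?mulr1.
Qed.

Lemma ctrG k : ctrmx (mink_G C k) = mink_G C k.
Proof.
apply/matrixP=> i j; rewrite !mxE eq_sym.
case: (i =P j) => [->|_]; last by rewrite conjC0.
by case: ifP; rewrite ?conjC1 ?conjCN1.
Qed.

Lemma ctrM m n p (A : 'M[C]_(m, n)) (B : 'M[C]_(n, p)) :
  ctrmx (A *m B) = ctrmx B *m ctrmx A.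
Proof. by rewrite /ctrmx (map_mxM Num.conj) trmx_mul. Qed.

Lemma ctrK m n (A : 'M[C]_(m, n)) : ctrmx (ctrmx A) = A.
Proof. by apply/matrixP=> i j; rewrite !mxE conjCK. Qed.

Lemma adjM m n p (A : 'M[C]_(m, n)) (B : 'M[C]_(n, p)) :
  mink_adj (A *m B) = mink_adj B *m mink_adj A.
Proof.
rewrite /mink_adj ctrM -!mulmxA; congr (_ *m _).
by rewrite (mulmxA (mink_G C n)) GG mul1mx.
Qed.

Lemma adjK m n (A : 'M[C]_(m, n)) : mink_adj (mink_adj A) = A.
Proof.
rewrite /mink_adj !ctrM ctrK !ctrG !mulmxA GG mul1mx -!mulmxA GG mulmx1 //.
Qed.

Lemma mx_ext p q (M N : 'M[C]_(p,q)) : (forall v : 'cV_q, M *m v = N *m v) -> M = N.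
Proof.
move=> H; apply/matrixP => i j.
have := congr1 (fun M : 'M[C]_(p,1) => M i 0) (H (delta_mx j 0)).
by rewrite -!colE !mxE.
Qed.

Lemma eq12 m n (A : 'M[C]_(m, n)) (X : 'M[C]_(n, m)) :
  is_g14m A X <-> X *m A *m mink_adj A = mink_adj A.
Proof.
split.
  case=> h1 h4.
  by rewrite -{1}h4 -adjM mulmxA h1.
move=> h.
have h' : A *m (mink_adj A *m mink_adj X) = A.
  by rewrite -adjM -{3}(adjK _ _ A) -h [in RHS]adjM adjK.
have hP : mink_adj (X *m A) = X *m A.
  have e : mink_adj (X *m A) = X *m (A *m mink_adj A) *m mink_adj X.
    by rewrite adjM -{1}h !mulmxA.
  have e2 : mink_adj (A *m mink_adj A) = A *m mink_adj A by rewrite adjM adjK.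
  have sw : forall (B : 'M[C]_m), mink_adj (X *m B *m mink_adj X) = X *m mink_adj B *m mink_adj X.
    by move=> B; rewrite adjM adjK adjM mulmxA.
  by rewrite -[RHS](adjK _ _ (X *m A)) [in RHS]e sw e2 e.
split => //.
by rewrite -mulmxA -hP adjM h'.
Qed.

Lemma XA_eq m n (A : 'M[C]_(m, n)) (X A1 : 'M[C]_(n, m)) :
  is_g14m A X -> is_g14m A A1 -> X *m A = A1 *m A.
Proof.
move=> [h1 h4] [g1 g4].
have e : X *m (A *m A1 *m A) = (X *m A) *m (A1 *m A) by rewrite !mulmxA.
by rewrite -h4 -{1}g1 e adjM g4 h4 -!mulmxA (mulmxA A X A) h1.
Qed.
End H.

Theorem theorem4p6 (C : numClosedFieldType) (m n : nat)
    (Hm : (0 < m)%N) (Hn : (0 < n)%N) (A : 'M[C]_(m, n)) :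
  (forall X : 'M[C]_(n, m),
     (is_g14m A X <-> X *m A *m mink_adj A = mink_adj A) /\
     (is_g14m A X <-> is_proj_onto_along (in_range (mink_adj A)) (in_null A) (X *m A))) /\
  (forall A1 : 'M[C]_(n, m), is_g14m A A1 ->
     forall X : 'M[C]_(n, m),
       is_g14m A X <-> exists Z : 'M[C]_(n, m), X = A1 + Z *m (1%:M - A *m A1)).
Proof.
split.
  move=> X; split; first exact: eq12.
  split.
    move=> hX; have [h1 h4] := hX; have h2 := proj1 (@eq12 C m n A X) hX.
    split.
    - move=> v [w ->]; rewrite /in_null => hv.
      by rewrite -h2 -mulmxA -mulmxA hv mulmx0.
    - move=> v; exists (X *m A *m v), (v - X *m A *m v); split.
      + by exists (mink_adj X *m v); rewrite -h4 adjM mulmxA.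
      + by rewrite /in_null mulmxBr !mulmxA h1 subrr.
      + by rewrite addrC subrK.
    - move=> s t [w ->]; rewrite /in_null => ht.
      by rewrite mulmxDr mulmxA h2 -mulmxA ht mulmx0 addr0.
  case=> _ _ hp; apply/eq12; apply: mx_ext => v.
  have := hp (mink_adj A *m v) 0 (ex_intro _ v erefl).
  rewrite /in_null mulmx0 addr0 mulmxA; apply => //.
move=> A1 hA1 X; split.
  move=> hX; exists (X - A1).
  rewrite mulmxBr mulmx1 mulmxBl mulmxA (@XA_eq C m n A X A1 hX hA1) mulmxA.
  by rewrite subrr subr0 addrC subrK.
case=> Z ->; have [g1 g4] := hA1.
have e : (A1 + Z *m (1%:M - A *m A1)) *m A = A1 *m A.
  by rewrite mulmxDl -mulmxA mulmxBl mul1mx g1 subrr mulmx0 addr0.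
split; last by rewrite e.
by rewrite -mulmxA e mulmxA g1.
Qed.
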